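(* Let $(M^*,p^* )$ be a non-compact model surface of revolution with metric $dt^2+m(t)^2d\theta^2$, where $m$ satisfies $m''(t)+K(t)m(t)=0$, $m(0)=0$, $m'(0)=1$. If $K(t)\le 0$ on $[0,\infty)$ and $\int_0^\infty t\,K(t)\,dt>-\infty$, then $M^*$ admits a finite total curvature.
   Context: A non-compact model surface of revolution is $\mathbb{R}^2$ with the metric $dt^2+m(t)^2d\theta^2$, where $(t,\theta)$ are polar coordinates about the origin and $m:(0,\infty)\to(0,\infty)$ is smooth, extends to a smooth odd function around $0$, and satisfies $m'(0)=1$; its Gauss curvature is $K=-m''/m$. The total curvature is $\int K_+\,dA+\int K_-\,dA$ ($K_+=\max\{K,0\}$, $K_-=\min\{K,0\}$, $dA=m(t)\,dt\,d\theta$ the area element), and it is finite if both integrals are finite. *)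

(* Defs.v *)
From Stdlib Require Import Reals.
Open Scope R_scope.

(* [D] is the tower of successive derivatives of [D 0]:
   D (S n) is the derivative of D n everywhere.  A function m is smooth
   iff such a tower with D 0 = m exists (and then D is unique). *)
Definition deriv_tower (D : nat -> R -> R) : Prop :=
  forall (n : nat) (x : R), derivable_pt_lim (D n) x (D (S n) x).

Definition gauss_curv (D : nat -> R -> R) (t : R) : R := - D 2%nat t / D 0%nat t.

Definition improper_integral_0_inf (f : R -> R) (l : R) : Prop :=
  exists H : (forall T : R, Riemann_integrable f 0 T),
    forall eps : R, eps > 0 ->
      exists A : R, forall T : R, T >= A -> Rabs (RiemannInt (H T) - l) < eps.

(* Total curvature int K_+ dA + int K_- dA is finite, where
   dA = m(t) dt dtheta on the model surface; integrating out theta gives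
   int K_{+-} dA = 2*PI * int_0^infty K_{+-}(t) m(t) dt. *)
Definition finite_total_curvature (D : nat -> R -> R) : Prop :=
  (exists lp : R, improper_integral_0_inf
     (fun t => 2 * PI * (Rmax (gauss_curv D t) 0 * D 0%nat t)) lp) /\
  (exists ln : R, improper_integral_0_inf
     (fun t => 2 * PI * (Rmin (gauss_curv D t) 0 * D 0%nat t)) ln).

(* Main.v *)
Require Import Defs.
From Stdlib Require Import Reals Lra FunctionalExtensionality.
Open Scope R_scope.

Lemma dcont f f' : (forall x, derivable_pt_lim f x (f' x)) -> continuity f.
Proof.
  intros Hd x. apply derivable_continuous_pt. exists (f' x). apply Hd.
Qed.

Lemma FTC_gen f g (Hd : forall x, derivable_pt_lim f x (g x)) (Hc : continuity g)
  a b (pr : Riemann_integrable g a b) : RiemannInt pr = f b - f a.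
Proof.
  pose (dv := (fun x => exist (fun l => derivable_pt_lim f x l) (g x) (Hd x)) : derivable f).
  assert (Hc' : continuity (derive f dv)) by exact Hc.
  pose (F := {| c1 := f; diff0 := dv; cont1 := Hc' |}).
  exact (@FTC_Riemann F a b pr).
Qed.

Lemma deriv_neg_arg f f' (Hd : forall x, derivable_pt_lim f x (f' x)) x :
  derivable_pt_lim (fun t => f (- t)) x (- f' (- x)).
Proof.
  assert (H1 : derivable_pt_lim (fun t => - t) x (-1)).
  { replace (fun t => - t) with (- id)%F by (apply functional_extensionality; reflexivity).
    apply derivable_pt_lim_opp, derivable_pt_lim_id. }
  assert (H := derivable_pt_lim_comp _ _ x _ _ H1 (Hd (- x))).
  replace (- f' (- x)) with (f' (- x) * -1) by ring. exact H.
Qed.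

Lemma odd_even f f' (Hd : forall x, derivable_pt_lim f x (f' x))
  (Ho : forall t, f (- t) = - f t) t : f' (- t) = f' t.
Proof.
  assert (H1 := deriv_neg_arg f f' Hd t).
  assert (H2 : derivable_pt_lim (fun t => f (- t)) t (- f' t)).
  { replace (fun t => f (- t)) with (- f)%F.
    - apply derivable_pt_lim_opp, Hd.
    - apply functional_extensionality; intro; unfold opp_fct; rewrite Ho; reflexivity. }
  assert (H := uniqueness_limite _ _ _ _ H1 H2). lra.
Qed.

Lemma even_odd f f' (Hd : forall x, derivable_pt_lim f x (f' x))
  (He : forall t, f (- t) = f t) t : f' (- t) = - f' t.
Proof.
  assert (H1 := deriv_neg_arg f f' Hd t).
  assert (H2 : derivable_pt_lim (fun t => f (- t)) t (f' t)).
  { replace (fun t => f (- t)) with f.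
    - apply Hd.
    - apply functional_extensionality; intro; rewrite He; reflexivity. }
  assert (H := uniqueness_limite _ _ _ _ H1 H2). lra.
Qed.

Theorem lemma4p1 (m : R -> R) (D : nat -> R -> R)
  (HD0 : D 0%nat = m)
  (Hsmooth : deriv_tower D)
  (Hodd : forall t : R, m (- t) = - m t)
  (Hpos : forall t : R, 0 < t -> 0 < m t)
  (Hd1 : D 1%nat 0 = 1)
  (HK : forall t : R, 0 < t -> gauss_curv D t <= 0)
  (Hint : exists l : R, improper_integral_0_inf (fun t => t * gauss_curv D t) l) :
  finite_total_curvature D.
Proof.
  subst m.
  assert (Hd : forall n x, derivable_pt_lim (D n) x (D (S n) x)) by exact Hsmooth.
  assert (Hc : forall n, continuity (D n)) by (intro n; apply (dcont _ _ (Hd n))).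
  assert (E1 : forall t, D 1%nat (- t) = D 1%nat t) by (intro t; apply (odd_even (D 0%nat)); auto).
  assert (O2 : forall t, D 2%nat (- t) = - D 2%nat t) by (intro t; apply (even_odd (D 1%nat)); auto).
  assert (m0 : D 0%nat 0 = 0) by (assert (H := Hodd 0); rewrite Ropp_0 in H; lra).
  assert (d20 : D 2%nat 0 = 0) by (assert (H := O2 0); rewrite Ropp_0 in H; lra).
  assert (mnz : forall t, t <> 0 -> D 0%nat t <> 0).
  { intros t Ht. destruct (Rlt_or_le 0 t) as [H|H].
    - apply Rgt_not_eq, Hpos, H.
    - assert (H' := Hpos (- t)). rewrite Hodd in H'. lra. }
  assert (Kle : forall t, gauss_curv D t <= 0).
  { intro t. destruct (Rtotal_order t 0) as [H|[H|H]].
    - replace (gauss_curv D t) with (gauss_curv D (- t)).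
      + apply HK; lra.
      + unfold gauss_curv. rewrite O2, Hodd. unfold Rdiv. rewrite Rinv_opp. ring.
    - subst. unfold gauss_curv. rewrite d20. unfold Rdiv. lra.
    - apply HK; lra. }
  assert (d2pos : forall t, 0 <= t -> 0 <= D 2%nat t).
  { intros t Ht. destruct (Req_dec t 0) as [->|Hn]; [lra|].
    replace (D 2%nat t) with (- gauss_curv D t * D 0%nat t).
    - apply Rmult_le_pos. + generalize (Kle t); lra. + apply Rlt_le, Hpos; lra.
    - unfold gauss_curv. field. apply mnz; auto. }
  assert (incr : forall a b, 0 <= a <= b -> D 1%nat a <= D 1%nat b).
  { intros a b [Ha Hab]. destruct (Req_dec a b) as [->|Hn]; [lra|].
    destruct (MVT_cor2 (D 1%nat) (D 2%nat) a b ltac:(lra) (fun c _ => Hd 1%nat c)) as [c [Hc1 Hc2]].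
    assert (0 <= D 2%nat c * (b - a)) by (apply Rmult_le_pos; [apply d2pos|]; lra). lra. }
  assert (d1ge : forall t, 0 <= t -> 1 <= D 1%nat t).
  { intros. rewrite <- Hd1. apply incr; lra. }
  assert (d1pos : forall t, 0 < D 1%nat t).
  { intro t. destruct (Rle_or_lt 0 t). - generalize (d1ge t H); lra.
    - rewrite <- E1. generalize (d1ge (- t) ltac:(lra)); lra. }
  assert (mle : forall t, 0 < t -> D 0%nat t <= t * D 1%nat t).
  { intros t Ht.
    destruct (MVT_cor2 (D 0%nat) (D 1%nat) 0 t Ht (fun c _ => Hd 0%nat c)) as [c [Hc1 Hc2]].
    rewrite m0 in Hc1. assert (D 1%nat c <= D 1%nat t) by (apply incr; lra).
    rewrite Rmult_comm. nra. }
  destruct Hint as [l [HI Hl]].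
  assert (partial : forall T, 0 <= T -> l <= RiemannInt (HI T)).
  { intros T HT. apply Rnot_lt_le. intro Hlt.
    destruct (Hl (l - RiemannInt (HI T)) ltac:(lra)) as [A HA].
    set (T' := Rmax A T).
    assert (HT' : T <= T') by apply Rmax_r.
    specialize (HA T' (Rle_ge _ _ (Rmax_l A T))).
    assert (prTT : Riemann_integrable (fun t => t * gauss_curv D t) T T')
      by (apply RiemannInt_P24 with 0; [apply RiemannInt_P1, HI | apply HI]).
    assert (Hch := RiemannInt_P26 (HI T) prTT (HI T')).
    assert (Hneg : RiemannInt prTT <= RiemannInt (RiemannInt_P14 T T' 0)).
    { apply RiemannInt_P19; auto. intros x Hx. unfold fct_cte.
      assert (gauss_curv D x <= 0) by apply Kle. nra. }
    rewrite RiemannInt_P15 in Hneg.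
    assert (Habs := Rle_abs (- (RiemannInt (HI T') - l))). rewrite Rabs_Ropp in Habs.
    lra. }
  assert (bound1 : forall T, 0 <= T -> D 1%nat T <= exp (- l)).
  { intros T HT.
    set (g := fun x => / D 1%nat x * D 2%nat x).
    assert (Hdg : forall x, derivable_pt_lim (comp ln (D 1%nat)) x (g x)).
    { intro x. apply derivable_pt_lim_comp. apply Hd. apply derivable_pt_lim_ln, d1pos. }
    assert (Hcg : continuity g).
    { intro x. unfold g. apply (continuity_pt_mult (fun x => / D 1%nat x) (D 2%nat)).
      - apply (continuity_pt_inv (D 1%nat)). apply Hc. apply Rgt_not_eq, d1pos.
      - apply Hc. }
    assert (prg : Riemann_integrable g 0 T) by (apply continuity_implies_RiemannInt; auto).
    assert (Hftc := FTC_gen _ _ Hdg Hcg 0 T prg).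
    unfold comp in Hftc. rewrite Hd1, ln_1 in Hftc.
    pose (pr2 := RiemannInt_P10 (-1) (RiemannInt_P14 0 T 0) (HI T)).
    assert (Hcmp : RiemannInt prg <= RiemannInt pr2).
    { apply RiemannInt_P19; auto. intros x Hx. unfold fct_cte, g.
      assert (0 < D 0%nat x) by (apply Hpos; lra).
      assert (D 0%nat x <= x * D 1%nat x) by (apply mle; lra).
      assert (0 < D 1%nat x) by apply d1pos.
      assert (0 <= D 2%nat x) by (apply d2pos; lra).
      replace (0 + -1 * (x * gauss_curv D x)) with (D 2%nat x * (x / D 0%nat x))
        by (unfold gauss_curv; field; lra).
      rewrite Rmult_comm. apply Rmult_le_compat_l; auto.
      apply Rmult_le_reg_r with (D 1%nat x * D 0%nat x). nra.
      replace (/ D 1%nat x * (D 1%nat x * D 0%nat x)) with (D 0%nat x) by (field; lra).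
      replace (x / D 0%nat x * (D 1%nat x * D 0%nat x)) with (x * D 1%nat x) by (field; lra).
      lra. }
    unfold pr2 in Hcmp. rewrite RiemannInt_P13 with (pr1 := RiemannInt_P14 0 T 0) (pr2 := HI T) in Hcmp.
    rewrite RiemannInt_P15 in Hcmp.
    assert (Hp := partial T HT).
    assert (Hln : ln (D 1%nat T) <= - l) by lra.
    apply Rnot_lt_le. intro Hlt.
    assert (H := ln_increasing _ _ (exp_pos (- l)) Hlt). rewrite ln_exp in H. lra. }
  set (Es := fun y => exists T, 0 <= T /\ y = D 1%nat T).
  destruct (completeness Es) as [L [HLub HLleast]].
  { exists (exp (- l)). intros y [T [HT ->]]. apply bound1, HT. }
  { exists (D 1%nat 0). exists 0. split; lra. }
  assert (upL : forall T, 0 <= T -> D 1%nat T <= L) by (intros T HT; apply HLub; exists T; auto).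
  split.
  - exists 0.
    replace (fun t => 2 * PI * (Rmax (gauss_curv D t) 0 * D 0%nat t)) with (fct_cte 0).
    + exists (fun T => RiemannInt_P14 0 T 0). intros eps Heps. exists 0. intros T _.
      rewrite RiemannInt_P15. rewrite Rmult_0_l, Rminus_0_r, Rabs_R0. lra.
    + apply functional_extensionality. intro t. unfold fct_cte.
      rewrite Rmax_right by apply Kle. ring.
  - set (g := fun t => -(2 * PI) * D 2%nat t).
    assert (Hdg : forall x, derivable_pt_lim (mult_real_fct (-(2*PI)) (D 1%nat)) x (g x)).
    { intro x. apply derivable_pt_lim_scal, Hd. }
    assert (Hcg : continuity g).
    { apply (dcont _ (fun x => -(2*PI) * D 3%nat x)). intro x.
      apply (derivable_pt_lim_scal (D 2%nat)), Hd. }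
    exists (-(2*PI) * (L - 1)).
    replace (fun t => 2 * PI * (Rmin (gauss_curv D t) 0 * D 0%nat t)) with g.
    + assert (prg : forall T, Riemann_integrable g 0 T).
      { intro T. destruct (Rle_dec 0 T).
        - apply continuity_implies_RiemannInt; auto.
        - apply RiemannInt_P1, continuity_implies_RiemannInt; auto; lra. }
      exists prg. intros eps Heps.
      assert (HPI := PI_RGT_0).
      assert (Heps' : 0 < eps / (2 * PI)) by (apply Rdiv_lt_0_compat; lra).
      destruct (Rle_or_lt L (L - eps / (2*PI)) ) as [Hc0|Hc0]; [lra|].
      assert (Hex : exists T0, 0 <= T0 /\ L - eps / (2*PI) < D 1%nat T0).
      { apply Classical_Pred_Type.not_all_not_ex. intro Hno.
        assert (L <= L - eps / (2*PI)); [|lra].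
        apply HLleast. intros y [T [HT ->]]. apply Rnot_lt_le. intro H'. apply (Hno T). auto. }
      destruct Hex as [T0 [HT0 HT0']].
      exists T0. intros T HT.
      rewrite (FTC_gen _ _ Hdg Hcg 0 T (prg T)). unfold mult_real_fct. rewrite Hd1.
      assert (D 1%nat T0 <= D 1%nat T) by (apply incr; lra).
      assert (D 1%nat T <= L) by (apply upL; lra).
      replace (-(2*PI) * D 1%nat T - -(2*PI) * 1 - -(2*PI) * (L - 1))
        with (2 * PI * (L - D 1%nat T)) by ring.
      rewrite Rabs_pos_eq by nra.
      apply Rmult_lt_reg_r with (/ (2*PI)). apply Rinv_0_lt_compat; lra.
      replace (2 * PI * (L - D 1%nat T) * / (2 * PI)) with (L - D 1%nat T) by (field; lra).
      unfold Rdiv in HT0'. lra.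
    + apply functional_extensionality. intro t. unfold g.
      rewrite Rmin_left by apply Kle. unfold gauss_curv.
      destruct (Req_dec t 0) as [->|Hn].
      * rewrite m0, d20. ring.
      * field. apply mnz, Hn.
Qed.
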